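(* Let $\mathbf{PtdCat}$ be the category of pointed categories and $\mathbf{TPtdCat}$ its full subcategory of terminally pointed categories, and let $\iota:\mathbf{TPtdCat}\hookrightarrow\mathbf{PtdCat}$ be the inclusion. Then $\iota$ has a right adjoint $G:\mathbf{PtdCat}\to\mathbf{TPtdCat}$, given on objects by $G(A,\mathcal C)=(1_A,\mathcal C/A)$ and on a morphism $(F,\alpha):(A,\mathcal C)\to(B,\mathcal D)$ by $G(F,\alpha)=(\Sigma_\alpha\circ F/A,\ \alpha)$. More precisely, for every pointed category $(A,\mathcal C)$ the morphism $(\Sigma_A,1_A):(1_A,\mathcal C/A)\to(A,\mathcal C)$ is universal from $\iota$ to $(A,\mathcal C)$: for every terminally pointed category $(1,\mathcal D)$ and every morphism $(F,\alpha):(1,\mathcal D)\to(A,\mathcal C)$ there is a unique morphism $(\overline F,\overline\alpha):(1,\mathcal D)\to(1_A,\mathcal C/A)$ with $(\Sigma_A,1_A)\circ(\overline F,\overline\alpha)=(F,\alpha)$.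
   Context: A pointed category is a pair $(A,\mathcal C)$ with $\mathcal C$ a non-empty category and $A$ an object of $\mathcal C$. A morphism of pointed categories $(A,\mathcal C)\to(B,\mathcal D)$ is a pair $(F,\alpha)$ with $F:\mathcal C\to\mathcal D$ a functor and $\alpha:FA\to B$ a morphism of $\mathcal D$. Composition: $(G,\beta)\circ(F,\alpha)=(GF,\ \beta\circ G\alpha)$; identities are $(1_{\mathcal C},1_A)$. This gives the category $\mathbf{PtdCat}$. A terminally pointed category is a pointed category $(1,\mathcal C)$ where $1$ is a chosen terminal object of $\mathcal C$; these span the full subcategory $\mathbf{TPtdCat}$. For an object $A$ of $\mathcal C$, $\mathcal C/A$ is the slice category (objects: morphisms $x:X\to A$; morphisms $g:(x:X\to A)\to(y:Y\to A)$ with $yg=x$), with terminal object $1_A$. $\Sigma_A:\mathcal C/A\to\mathcal C$ is the forgetful functor. For $f:A\to B$ in $\mathcal C$, $\Sigma_f:\mathcal C/A\to\mathcal C/B$ sends $x$ to $fx$ and $g$ to $g$. For a functor $F:\mathcal C\to\mathcal D$, the slice functor $F/A:\mathcal C/A\to\mathcal D/FA$ sends $x:X\to A$ to $Fx$ and $g$ to $Fg$. *)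

(* Defs.v *)
From Stdlib Require Import ProofIrrelevance.
Set Implicit Arguments.
Unset Strict Implicit.

(* A category; composition is written  comp g f = g o f  for f : X -> Y, g : Y -> Z. *)
Record Category := {
  Obj :> Type;
  hom : Obj -> Obj -> Type;
  id : forall X, hom X X;
  comp : forall X Y Z, hom Y Z -> hom X Y -> hom X Z;
  comp_id_l : forall X Y (f : hom X Y), comp (id Y) f = f;
  comp_id_r : forall X Y (f : hom X Y), comp f (id X) = f;
  comp_assoc : forall X Y Z W (f : hom X Y) (g : hom Y Z) (h : hom Z W),
      comp h (comp g f) = comp (comp h g) f
}.
Arguments id {c} X.
Arguments comp {c X Y Z} g f.
Arguments hom {c} X Y.

Record Functor (C D : Category) := {
  fobj :> C -> D;
  fmap : forall X Y : C, hom X Y -> hom (fobj X) (fobj Y);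
  fmap_id : forall X : C, fmap (id X) = id (fobj X);
  fmap_comp : forall (X Y Z : C) (f : hom X Y) (g : hom Y Z),
      fmap (comp g f) = comp (fmap g) (fmap f)
}.
Arguments fmap {C D} f0 {X Y} f.

Definition fcomp_fun (C D E : Category) (G : Functor D E) (F : Functor C D) :
  Functor C E.
Proof.
  refine {| fobj := fun X => G (F X);
            fmap := fun X Y f => fmap G (fmap F f) |}.
  - intros X. rewrite (fmap_id F), (fmap_id G). reflexivity.
  - intros X Y Z f g. rewrite (fmap_comp F), (fmap_comp G). reflexivity.
Defined.

Definition is_terminal (C : Category) (t : C) : Prop :=
  forall X : C, exists f : hom X t, forall g : hom X t, g = f.

(* Morphisms of pointed categories (F, alpha) : (A, C) -> (B, D). *)
Record PMor (C D : Category) (A : C) (B : D) := {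
  pF : Functor C D;
  palpha : hom (pF A) B
}.

Definition pcomp (C D E : Category) (A : C) (B : D) (X : E)
  (m2 : PMor B X) (m1 : PMor A B) : PMor A X :=
  {| pF := fcomp_fun (pF m2) (pF m1);
     palpha := comp (palpha m2) (fmap (pF m2) (palpha m1)) |}.

Section Slice.
Variables (C : Category) (A : C).

Definition sobj := { X : C & hom X A }.
Definition shom (x y : sobj) :=
  { g : hom (projT1 x) (projT1 y) | comp (projT2 y) g = projT2 x }.

Lemma shom_eq (x y : sobj) (g h : shom x y) : proj1_sig g = proj1_sig h -> g = h.
Proof.
  destruct g as [g pg], h as [h ph]; simpl; intros ->.
  f_equal; apply proof_irrelevance.
Qed.

Definition sid (x : sobj) : shom x x.
Proof. exists (id (projT1 x)). apply comp_id_r. Defined.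

Definition scomp (x y z : sobj) (g : shom y z) (f : shom x y) : shom x z.
Proof.
  exists (comp (proj1_sig g) (proj1_sig f)).
  rewrite comp_assoc, (proj2_sig g). exact (proj2_sig f).
Defined.

Definition slice : Category.
Proof.
  refine {| Obj := sobj; hom := shom; id := sid; comp := scomp |}.
  - intros; apply shom_eq; simpl; apply comp_id_l.
  - intros; apply shom_eq; simpl; apply comp_id_r.
  - intros; apply shom_eq; simpl; apply comp_assoc.
Defined.

Definition slice_top : slice := existT (fun X : C => hom X A) A (id A).

Definition Sigma_fun : Functor slice C.
Proof.
  refine {| fobj := fun x : slice => projT1 x;
            fmap := fun x y (g : hom x y) => proj1_sig g |}.
  - reflexivity.
  - reflexivity.
Defined.

Definition Sigma_mor : @PMor slice C slice_top A :=
  @Build_PMor slice C slice_top A Sigma_fun (id A).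
End Slice.

(* Main.v *)
Require Import Defs.
From Stdlib Require Import ProofIrrelevance FunctionalExtensionality ClassicalEpsilon.

Lemma functor_eq (C D : Category) (F G : Functor C D) (e : forall X, F X = G X)
  (hm : forall X Y (f : hom X Y), fmap G f =
     eq_rect _ (fun Z => hom Z (G Y))
       (eq_rect _ (fun W => hom (F X) W) (fmap F f) _ (e Y)) _ (e X)) : F = G.
Proof.
  destruct F as [fo fm fi fc], G as [go gm gi gc]; simpl in *.
  assert (E : fo = go) by (apply functional_extensionality; exact e).
  subst go.
  assert (gm = fm).
  { apply functional_extensionality_dep; intro X;
    apply functional_extensionality_dep; intro Y;
    apply functional_extensionality; intro f.
    rewrite hm. rewrite (proof_irrelevance _ (e X) eq_refl),
      (proof_irrelevance _ (e Y) eq_refl). reflexivity. }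
  subst gm. f_equal; apply proof_irrelevance.
Qed.

Lemma tr_shom (C : Category) (A : C) (x x' y y' : sobj A) (ex : x = x') (ey : y = y')
  (g : shom x y) :
  proj1_sig (eq_rect x (fun Z => shom Z y') (eq_rect y (fun W => shom x W) g y' ey) x' ex) =
  eq_rect _ (fun Z => hom Z (projT1 y'))
    (eq_rect _ (fun W => hom (projT1 x) W) (proj1_sig g) _ (f_equal (@projT1 _ _) ey))
    _ (f_equal (@projT1 _ _) ex).
Proof. destruct ex, ey; reflexivity. Qed.

Section Ext.
Variables (C D : Category) (A : C) (one : D) (t : forall X : D, hom X one)
  (ht : forall X (g : hom X one), g = t X) (F : Functor D C) (a : hom (F one) A).

Lemma ext_fmap_pf (X Y : D) (f : hom X Y) :
  comp (comp a (fmap F (t Y))) (fmap F f) = comp a (fmap F (t X)).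
Proof.
  rewrite <- (comp_assoc (fmap F f) (fmap F (t Y)) a), <- fmap_comp, (ht X (comp (t Y) f)).
  reflexivity.
Qed.

Definition ext_fun : Functor D (slice A).
Proof.
  refine {| fobj := fun X => (existT (fun Z : C => hom Z A) (F X) (comp a (fmap F (t X))) : slice A);
            fmap := fun X Y f => exist _ (fmap F f) (ext_fmap_pf X Y f) |}.
  - intros X; apply shom_eq; simpl; apply fmap_id.
  - intros; apply shom_eq; simpl; apply fmap_comp.
Defined.

Definition ext_alpha : hom (ext_fun one) (slice_top A).
Proof.
  exists a. simpl. rewrite <- (ht one (id one)), fmap_id, comp_id_l, comp_id_r.
  reflexivity.
Defined.

Definition ext : PMor one (slice_top A) := @Build_PMor D (slice A) one (slice_top A) ext_fun ext_alpha.
End Ext.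

Theorem mainTheorem1 :
  forall (C : Category) (A : C),
    is_terminal (slice_top A) /\
    forall (D : Category) (one : D), is_terminal one ->
    forall m : PMor one A,
      exists! mbar : PMor one (slice_top A), pcomp (Sigma_mor A) mbar = m.
Proof.
  intros C A; split.
  - intros x. unshelve eexists.
    + exists (projT2 x). apply comp_id_l.
    + intros g. apply shom_eq; simpl. destruct g as [g pg]; simpl in *.
      rewrite <- pg. simpl. symmetry; apply comp_id_l.
  - intros D one Ht m.
    set (t := fun X => proj1_sig (constructive_indefinite_description _ (Ht X))).
    assert (ht : forall X (g : hom X one), g = t X).
    { intros X g. unfold t. destruct (constructive_indefinite_description _ (Ht X)) as [u pu].
      simpl. apply pu. }
    exists (@ext C D A one t ht (pF m) (palpha m)). split.
    + destruct m as [[fo fm fi fc] a].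
      unfold pcomp, fcomp_fun, ext; cbn.
      match goal with |- @Build_PMor _ _ _ _ (@Build_Functor _ _ _ _ ?p ?q) _ = _ =>
        rewrite (proof_irrelevance _ p fi), (proof_irrelevance _ q fc) end.
      f_equal. apply comp_id_l.
    + intros mbar H. subst m. destruct mbar as [G b].
      assert (e : forall X, @ext_fun C D A one t ht (pF (pcomp (Sigma_mor A) (@Build_PMor D (slice A) one (slice_top A) G b))) (palpha (pcomp (Sigma_mor A) (@Build_PMor D (slice A) one (slice_top A) G b))) X = G X).
      { intros X. rewrite (sigT_eta (G X)). cbn. f_equal.
        change (comp (comp (projT2 (slice_top A)) (proj1_sig b)) (proj1_sig (fmap G (t X))) = projT2 (G X)). rewrite (proj2_sig b). exact (proj2_sig (fmap G (t X))). }
      assert (EF : @ext_fun C D A one t ht (pF (pcomp (Sigma_mor A) (@Build_PMor D (slice A) one (slice_top A) G b))) (palpha (pcomp (Sigma_mor A) (@Build_PMor D (slice A) one (slice_top A) G b))) = G).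
      { apply (@functor_eq _ _ _ _ e). intros X Y f. apply shom_eq. rewrite tr_shom.
        generalize (f_equal (@projT1 _ _) (e X)) (f_equal (@projT1 _ _) (e Y)).
        cbn. intros p1 p2.
        rewrite (proof_irrelevance _ p1 eq_refl), (proof_irrelevance _ p2 eq_refl).
        reflexivity. }
      unfold ext. generalize (@ext_alpha C D A one t ht (pF (pcomp (Sigma_mor A) (@Build_PMor D (slice A) one (slice_top A) G b))) (palpha (pcomp (Sigma_mor A) (@Build_PMor D (slice A) one (slice_top A) G b)))).
      rewrite EF. intros bb. f_equal. apply shom_eq.
      destruct bb as [bb pb], b as [b' pb']; simpl in *.
      rewrite <- pb' in pb. rewrite !comp_id_l in pb. exact pb.
Qed.
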